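(* For every integer $l\ge 7$ there is no monotone search $\tilde c$-strategy (for any color assignment $\tilde c$) that cleans the tree $T_l$ using $3$ searchers.
   Context: An edge-labeled graph $G=(V(G),E(G),c)$ is a simple graph with $c\colon E(G)\to\{1,\dots,k\}$; $c(v)$ denotes the set of colors of edges incident to $v$. Edge search: a search strategy is a sequence of moves: placing a searcher on a vertex, removing a searcher from a vertex, or sliding a searcher from $u$ along an edge $\{u,v\}$ to $v$. Initially all edges are contaminated; a slide along an edge makes it clean; after every move, a clean edge $e$ becomes contaminated (recontamination) if some path with no searcher-occupied vertex joins an endpoint of $e$ to an endpoint of a contaminated edge. The strategy must end with all edges clean; it uses $k$ searchers if at most $k$ are simultaneously present. It is monotone if no recontamination occurs. In a search $\tilde c$-strategy each searcher $j$ has a fixed color $\tilde c(j)$, may be placed on $v$ only if $\tilde c(j)\in c(v)$, and may slide along $e$ only if $\tilde c(j)=c(e)$. The tree $T_l$ ($l\ge 3$), with colors $\{1,2,3\}$: For $i\in\{1,2\}$, $T'_i$ has root $q_i$ with three children joined to $q_i$ by edges of color 1, and each of these children has three children joined by edges of color 2. $T''_l$: a path $v_0,v_1,\dots,v_{l+1}$ with edges $e_x=\{v_x,v_{x+1}\}$ of color $(x \bmod 3)+1$ for $x\in\{0,\dots,l\}$; additionally, for each $x\in\{1,\dots,l\}$, attach to $v_x$ one pendant edge of color $(x\bmod 3)+1$ and one pendant edge of color $((x-1)\bmod 3)+1$. Let $P$ be a path $p_0p_1p_2p_3p_4$ with edges $\{p_0,p_1\},\{p_3,p_4\}$ of color 3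 and $\{p_1,p_2\},\{p_2,p_3\}$ of color 2. $T_l$ is obtained from disjoint copies of $T'_1,T'_2,T''_l,P$ by identifying $p_2$ with $v_0$, $p_0$ with $q_1$, and $p_4$ with $q_2$. *)

(* Defs.v *)
From mathcomp Require Import all_boot.
Set Implicit Arguments. Unset Strict Implicit. Unset Printing Implicit Defensive.

(** Edges are identified by their index in the list. *)
Definition edge := ((nat * nat) * nat)%type.
Definition elgraph := seq edge.

Definition eu (e : edge) : nat := e.1.1.
Definition ev (e : edge) : nat := e.1.2.
Definition ecol (e : edge) : nat := e.2.

Definition nth_edge (G : elgraph) (i : nat) : edge := nth ((0, 0), 0) G i.

Definition adj (G : elgraph) (x y : nat) : bool :=
  has (fun e => ((eu e == x) && (ev e == y)) || ((eu e == y) && (ev e == x))) G.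

Definition color_at (G : elgraph) (v c : nat) : bool :=
  has (fun e => ((eu e == v) || (ev e == v)) && (ecol e == c)) G.

(** * Search states: position of each of the k searchers (None = not on the
    graph) and the set of clean edges (by index). *)
Record sstate (k : nat) := SState {
  spos : 'I_k -> option nat;
  sclean : nat -> Prop }.

Definition init_state (k : nat) : sstate k := SState (fun _ => None) (fun _ => False).

Definition occupied k (pos : 'I_k -> option nat) (z : nat) : bool :=
  [exists j, pos j == Some z].

Definition free_conn (G : elgraph) k (pos : 'I_k -> option nat) (x y : nat) : Prop :=
  exists p : seq nat, [/\ path (adj G) x p, last x p = y &
                          forall z, z \in x :: p -> ~~ occupied pos z].

Definition recont (G : elgraph) k (pos : 'I_k -> option nat) (cl : nat -> Prop)
  (i : nat) : Prop :=
  exists2 j, j < size G /\ ~ cl j &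
    exists a b, (a = eu (nth_edge G i) \/ a = ev (nth_edge G i)) /\
                (b = eu (nth_edge G j) \/ b = ev (nth_edge G j)) /\
                free_conn G pos a b.

Inductive move (k : nat) :=
| Place of 'I_k & nat
| Remove of 'I_k
| Slide of 'I_k & nat.     (* slide searcher j along the edge of index i *)

Definition other (e : edge) (u : nat) : nat := if eu e == u then ev e else eu e.

(* legality of a move in a search ct-strategy (ct = colors of searchers) *)
Definition legal (G : elgraph) k (ct : 'I_k -> nat) (s : sstate k) (m : move k)
  : Prop :=
  match m with
  | Place j v => spos s j = None /\ color_at G v (ct j)
  | Remove j => spos s j <> None
  | Slide j i => i < size G /\ ecol (nth_edge G i) = ct j /\
      exists u, spos s j = Some u /\ (u = eu (nth_edge G i) \/ u = ev (nth_edge G i))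
  end.

Definition pos_after G k (s : sstate k) (m : move k) : 'I_k -> option nat :=
  match m with
  | Place j v => fun j' => if j' == j then Some v else spos s j'
  | Remove j => fun j' => if j' == j then None else spos s j'
  | Slide j i => fun j' => if j' == j then
        (match spos s j with
         | Some u => Some (other (nth_edge G i) u)
         | None => None end)
      else spos s j'
  end.

(* clean edges after the move, before recontamination *)
Definition clean_after k (s : sstate k) (m : move k) : nat -> Prop :=
  match m with
  | Slide _ i => fun i' => sclean s i' \/ i' = i
  | _ => sclean s
  end.

Definition next G k (s : sstate k) (m : move k) : sstate k :=
  SState (pos_after G s m)
    (fun i => clean_after s m i /\ ~ recont G (pos_after G s m) (clean_after s m) i).

Definition no_recont G k (s : sstate k) (m : move k) : Prop :=
  forall i, i < size G -> clean_after s m i ->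
    ~ recont G (pos_after G s m) (clean_after s m) i.

Fixpoint mono_search (G : elgraph) k (ct : 'I_k -> nat) (s : sstate k)
    (ms : seq (move k)) : Prop :=
  match ms with
  | [::] => forall i, i < size G -> sclean s i
  | m :: ms' => [/\ legal G ct s m, no_recont G s m & mono_search G ct (next G s m) ms']
  end.

(** * The tree T_l
    Vertex numbering: v_x = x (0 <= x <= l+1); pendants at v_x (1<=x<=l):
    l+2+2(x-1) (color (x mod 3)+1) and l+3+2(x-1) (color ((x-1) mod 3)+1);
    B := 3l+2: p1 = B, p3 = B+1, q1 = B+2, q2 = B+15 (= roots of T'_1, T'_2);
    in T'_i with root r: children r+1+a, grandchildren r+4+3a+b (a,b<3). *)
Definition Tprime (r : nat) : elgraph :=
  [seq ((r, r + 1 + a), 1) | a <- iota 0 3] ++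
  [seq ((r + 1 + a, r + 4 + 3 * a + b), 2) | a <- iota 0 3, b <- iota 0 3].

Definition Tsecond (l : nat) : elgraph :=
  [seq ((x, x.+1), x %% 3 + 1) | x <- iota 0 l.+1] ++
  flatten [seq [:: ((x, l + 2 + 2 * (x - 1)), x %% 3 + 1);
                   ((x, l + 3 + 2 * (x - 1)), (x - 1) %% 3 + 1)] | x <- iota 1 l].

Definition Tl (l : nat) : elgraph :=
  let B := 3 * l + 2 in
  let p1 := B in let p3 := B + 1 in let q1 := B + 2 in let q2 := B + 15 in
  Tprime q1 ++ Tprime q2 ++ Tsecond l ++
  [:: ((q1, p1), 3); ((p1, 0), 2); ((0, p3), 2); ((p3, q2), 3)].

(* Main.v *)
Require Import Defs.
From mathcomp Require Import all_boot.
From mathcomp Require Import zify.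
From Stdlib Require Import PArith FMapPositive.
Require Import Defs.
Set Implicit Arguments. Unset Strict Implicit. Unset Printing Implicit Defensive.

Definition E3 : elgraph := [:: ((13, 14), 1); ((13, 15), 1); ((13, 16), 1); ((14, 17), 2); ((14, 18), 2); ((14, 19), 2); ((15, 20), 2); ((15, 21), 2); ((15, 22), 2); ((16, 23), 2); ((16, 24), 2); ((16, 25), 2); ((26, 27), 1); ((26, 28), 1); ((26, 29), 1); ((27, 30), 2); ((27, 31), 2); ((27, 32), 2); ((28, 33), 2); ((28, 34), 2); ((28, 35), 2); ((29, 36), 2); ((29, 37), 2); ((29, 38), 2); ((0, 1), 1); ((1, 2), 2); ((2, 3), 3); ((3, 4), 1); ((1, 5), 2); ((1, 6), 1); ((2, 7), 3); ((2, 8), 2); ((3, 9), 1); ((3, 10), 3); ((13, 11), 3); ((11, 0), 2); ((0, 12), 2); ((12, 26), 3)].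
Definition vcols : seq (seq nat) := [:: [:: 1; 2]; [:: 1; 2]; [:: 2; 3]; [:: 1; 3]; [:: 1]; [:: 2]; [:: 1]; [:: 3]; [:: 2]; [:: 1]; [:: 3]; [:: 2; 3]; [:: 2; 3]; [:: 1; 3]; [:: 1; 2]; [:: 1; 2]; [:: 1; 2]; [:: 2]; [:: 2]; [:: 2]; [:: 2]; [:: 2]; [:: 2]; [:: 2]; [:: 2]; [:: 2]; [:: 1; 3]; [:: 1; 2]; [:: 1; 2]; [:: 1; 2]; [:: 2]; [:: 2]; [:: 2]; [:: 2]; [:: 2]; [:: 2]; [:: 2]; [:: 2]; [:: 2]].
Definition incl : seq (seq nat) :=
 [:: [:: 24; 35; 36]; [:: 24; 25; 28; 29]; [:: 25; 26; 30; 31]; [:: 26; 27; 32; 33]; [:: 27]; [:: 28]; [:: 29]; [:: 30]; [:: 31]; [:: 32]; [:: 33]; [:: 34; 35]; [:: 36; 37]; [:: 0; 1; 2; 34]; [:: 0; 3; 4; 5]; [:: 1; 6; 7; 8]; [:: 2; 9; 10; 11]; [:: 3]; [:: 4]; [:: 5]; [:: 6]; [:: 7]; [:: 8]; [:: 9]; [:: 10]; [:: 11]; [:: 12; 13; 14; 37]; [:: 12; 15; 16; 17]; [:: 13; 18; 19; 20]; [:: 14; 21; 22; 23]; [:: 15]; [:: 16]; [:: 17]; [:: 18]; [:: 19]; [:: 20]; [:: 21]; [:: 22]; [:: 23]].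
Definition intl : seq nat := [:: 0; 1; 2; 3; 11; 12; 13; 14; 15; 16; 26; 27; 28; 29].

Definition ast := (seq bool * seq (option nat))%type.
Definition mixedb (C : seq bool) (v : nat) : bool :=
  let l := nth [::] incl v in
  has (fun i => nth false C i) l && has (fun i => ~~ nth false C i) l.
Definition colok (k : nat) (a : nat) : bool := k.+1 \in nth [::] vcols a.
Definition guarded (P : seq (option nat)) v := Some v \in P.

Definition trySet (C : seq bool) (P : seq (option nat)) (mv : seq bool) (k : nat) (x : option nat)
  : option ast :=
  let P' := set_nth None P k x in
  if (if x is Some v then colok k v && nth false mv v else true) &&
     (if nth None P k is Some v then ~~ nth false mv v || guarded P' v else true)
  then Some (C, P') else None.

Definition newpos (P : seq (option nat)) (k u w : nat) (g : seq nat) (k' : nat) : option nat :=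
  if k' == k then Some w else
  match nth 0 g k' with 0 => nth None P k' | 1 => Some u | _ => Some w end.

Definition opts (P : seq (option nat)) (k u w k' : nat) : seq nat :=
  if k' == k then [:: 0] else
  if nth None P k' == None then
    0 :: (if colok k' u then [:: 1] else [::]) ++ (if colok k' w then [:: 2] else [::])
  else [:: 0].

Definition gsl (P : seq (option nat)) (k u w : nat) : seq (seq nat) :=
  [seq [:: ab.1; ab.2; c] | ab <- [seq (a, b) | a <- opts P k u w 0, b <- opts P k u w 1],
                            c <- opts P k u w 2].

Definition mixp (mv : seq bool) (u w : nat) (mu mw : bool) (v : nat) : bool :=
  if v == u then mu else if v == w then mw else nth false mv v.

Definition normo (f : nat -> bool) (o : option nat) : option nat :=
  if o is Some a then (if f a then o else None) else None.

Definition sgroup (C : seq bool) (P : seq (option nat)) (mv : seq bool) (i k u w : nat) : seq ast :=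
  if (nth None P k == Some u) || ((nth None P k == None) && ~~ nth false mv u) then
    let C' := set_nth false C i true in
    let mu := mixedb C' u in let mw := mixedb C' w in
    pmap (fun g =>
      let Q := map (fun k' => normo (mixp mv u w mu mw) (newpos P k u w g k')) (iota 0 3) in
      if (~~ mu || guarded Q u) && (~~ mw || guarded Q w) then Some (C', Q) else None) (gsl P k u w)
  else [::].

Definition slideGroup (C : seq bool) (P : seq (option nat)) (mv : seq bool) (i : nat) (e : edge)
  (d : bool) : seq ast :=
  sgroup C P mv i (ecol e).-1 (if d then eu e else ev e) (if d then ev e else eu e).

Definition setch : seq (nat * option nat) := [seq (k, x) | k <- iota 0 3, x <- None :: map Some intl].
Definition slch : seq ((nat * edge) * bool) := [seq (ie, d) | ie <- zip (iota 0 38) E3, d <- [:: true; false]].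

Definition succ (s : ast) : seq ast :=
  let C := s.1 in let P := s.2 in
  let mv := map (mixedb C) (iota 0 39) in
  pmap (fun kx => trySet C P mv kx.1 kx.2) setch ++
  flatten (map (fun c => slideGroup C P mv c.1.1 c.1.2 c.2) slch).

Fixpoint pushbits (bs : seq bool) (acc : positive) : positive :=
  match bs with [::] => acc | b :: bs => pushbits bs (if b then xI acc else xO acc) end.
Definition enc_opt (o : option nat) : seq bool :=
  if o is Some v then true :: rcons (nseq v true) false else [:: false].
Definition key (s : ast) : positive := pushbits (s.1 ++ flatten (map enc_opt s.2)) xH.

Definition init_ast : ast := (nseq 38 false, nseq 3 None).

Fixpoint bfs (fuel : nat) (work : seq ast) (vis : PositiveMap.t ast) : seq ast * PositiveMap.t ast :=
  match fuel with 0 => (work, vis) | fuel.+1 =>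
  match work with [::] => (work, vis) | s :: work' =>
    let '(vis', new) := foldl (fun acc t => let '(v, nw) := acc in
         match PositiveMap.find (key t) v with Some _ => acc
         | None => (PositiveMap.add (key t) t v, t :: nw) end) (vis, [::]) (succ s) in
    bfs fuel (new ++ work') vis'
  end end.
Fixpoint bfs2 (n : nat) (work : seq ast) (vis : PositiveMap.t ast) : PositiveMap.t ast :=
  match n with 0 => vis | n.+1 => let '(w, v) := bfs 1000 work vis in bfs2 n w v end.

Definition Rset := bfs2 1000 [:: init_ast] (PositiveMap.add (key init_ast) init_ast (PositiveMap.empty _)).
Definition finalb (s : ast) := all id s.1.
Definition inR (R : PositiveMap.t ast) (t : ast) := PositiveMap.find (key t) R == Some t.
Definition checkR (R : PositiveMap.t ast) : bool :=
  inR R init_ast &&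
  all (fun ks => ~~ finalb ks.2 && all (inR R) (succ ks.2)) (PositiveMap.elements R).


Lemma checkR_ok : checkR Rset = true.
Proof. vm_cast_no_check (erefl true). Qed.

Lemma all_In (A : Type) (p : A -> bool) (l : list A) x : all p l -> List.In x l -> p x.
Proof. elim: l => //= y l IH /andP[py pl] [<-|] //; exact: IH. Qed.

Definition inRs (s : ast) := PositiveMap.find (key s) Rset = Some s.

Lemma R_closed s t : inRs s -> t \in succ s -> inRs t.
Proof.
move=> Hs Ht; have := checkR_ok; rewrite /checkR => /andP[_ H].
have := all_In H (PositiveMap.elements_correct _ _ Hs) => /= /andP[_ /allP/(_ _ Ht)].
by rewrite /inR => /eqP.
Qed.

Lemma R_nofinal s : inRs s -> finalb s = false.
Proof.
move=> Hs; have := checkR_ok; rewrite /checkR => /andP[_ H].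
by have := all_In H (PositiveMap.elements_correct _ _ Hs) => /= /andP[/negbTE].
Qed.

Lemma R_init : inRs init_ast.
Proof. by have := checkR_ok; rewrite /checkR => /andP[/eqP]. Qed.

Lemma size_flat2 (T : Type) (f g : nat -> T) (s : seq nat) :
  size (flatten [seq [:: f x; g x] | x <- s]) = 2 * size s.
Proof. by elim: s => //= x s IH; rewrite IH mulnS. Qed.

Lemma nth_flat2 (T : Type) (d : T) (f g : nat -> T) (s : seq nat) y :
  y < 2 * size s ->
  nth d (flatten [seq [:: f x; g x] | x <- s]) y =
  if odd y then g (nth 0 s y./2) else f (nth 0 s y./2).
Proof.
elim: s y => [|x s IH] y /=; first by lia.
case: y => [|[|y]] //= Hy.
rewrite IH; last by move: Hy; rewrite mulnS; lia.
by rewrite negbK.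
Qed.

Lemma size_Tsecond l : size (Tsecond l) = l.+1 + 2 * l.
Proof. by rewrite /Tsecond size_cat size_map size_iota size_flat2 size_iota. Qed.

Lemma size_Tprime r : size (Tprime r) = 12.
Proof. by []. Qed.

Lemma sizeTT a b : size (Tprime a ++ Tprime b) = 24.
Proof. by rewrite size_cat !size_Tprime. Qed.

Definition Plist l : elgraph :=
  [:: ((3*l+2+2, 3*l+2),3); ((3*l+2,0),2); ((0,3*l+2+1),2); ((3*l+2+1,3*l+2+15),3)].

Lemma TlE l : Tl l = (Tprime (3*l+2+2) ++ Tprime (3*l+2+15)) ++ Tsecond l ++ Plist l.
Proof. by rewrite /Tl catA. Qed.

Lemma size_Tl l : size (Tl l) = 24 + l.+1 + 2 * l + 4.
Proof. by rewrite TlE size_cat (size_cat (Tsecond l)) size_cat size_Tsecond !size_Tprime /=; lia. Qed.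

Lemma nth_Tl_low l j : j < 24 ->
  nth_edge (Tl l) j = nth_edge (Tprime (3*l+2+2) ++ Tprime (3*l+2+15)) j.
Proof. by move=> Hj; rewrite /nth_edge TlE nth_cat sizeTT Hj. Qed.

Lemma nth_Tl_sec l j : 24 <= j < 24 + l.+1 + 2 * l ->
  nth_edge (Tl l) j = nth_edge (Tsecond l) (j - 24).
Proof.
move=> /andP[H1 H2]; rewrite /nth_edge TlE nth_cat sizeTT.
rewrite ifF; last by lia.
rewrite nth_cat size_Tsecond.
by have -> : j - 24 < l.+1 + 2 * l by lia.
Qed.

Lemma nth_Tl_path l x : x <= l -> nth_edge (Tl l) (24 + x) = ((x, x.+1), x %% 3 + 1).
Proof.
move=> Hx; rewrite nth_Tl_sec; last by lia.
rewrite /nth_edge /Tsecond nth_cat size_map size_iota.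
have -> : 24 + x - 24 = x by lia.
by rewrite ifT ?(nth_map 0) ?size_iota ?nth_iota //; lia.
Qed.

Lemma nth_Tl_pend l y : y < 2 * l ->
  nth_edge (Tl l) (24 + l.+1 + y) =
  if odd y then ((y./2 + 1, l + 3 + 2 * (y./2 + 1 - 1)), (y./2 + 1 - 1) %% 3 + 1)
  else ((y./2 + 1, l + 2 + 2 * (y./2 + 1 - 1)), (y./2 + 1) %% 3 + 1).
Proof.
move=> Hy; rewrite nth_Tl_sec; last by lia.
rewrite /nth_edge /Tsecond nth_cat size_map size_iota.
have -> : 24 + l.+1 + y - 24 = l.+1 + y by lia.
rewrite ifF; last by lia.
have -> : l.+1 + y - l.+1 = y by lia.
rewrite nth_flat2 ?size_iota // nth_iota; last by rewrite -(odd_double_half y) in Hy; lia.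
by rewrite addnC.
Qed.

Lemma nth_Tl_P l k : k < 4 ->
  nth_edge (Tl l) (24 + l.+1 + 2 * l + k) = nth ((0,0),0) (Plist l) k.
Proof.
move=> Hk; rewrite /nth_edge TlE nth_cat sizeTT.
have -> : 24 + l.+1 + 2 * l + k < 24 = false by lia.
rewrite nth_cat size_Tsecond.
have -> : 24 + l.+1 + 2 * l + k - 24 < l.+1 + 2 * l = false by lia.
by congr nth; lia.
Qed.

Definition psi n a := if a <= 4 then a else if a <= 10 then a + n else a + 3 * n.
Definition phi n i := if i < 28 then i else if i < 34 then i + n else i + 3 * n.
Definition psiinv n x :=
  if x <= 4 then Some x else if (n + 5 <= x) && (x <= n + 10) then Some (x - n)
  else if (3 * n + 11 <= x) && (x <= 3 * n + 38) then Some (x - 3 * n) else None.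

Lemma psiK n a : a < 39 -> psiinv n (psi n a) = Some a.
Proof.
rewrite /psi /psiinv => Ha.
case: (leqP a 4) => H1; first by rewrite H1.
case: (leqP a 10) => H2.
  have -> : (a + n <= 4) = false by lia.
  have -> : (n + 5 <= a + n) && (a + n <= n + 10) by lia.
  by congr Some; lia.
have -> : (a + 3 * n <= 4) = false by lia.
have -> : (n + 5 <= a + 3 * n) && (a + 3 * n <= n + 10) = false by lia.
have -> : (3 * n + 11 <= a + 3 * n) && (a + 3 * n <= 3 * n + 38) by lia.
by congr Some; lia.
Qed.

Lemma psiinvP n x a : psiinv n x = Some a -> a < 39 /\ x = psi n a.
Proof.
rewrite /psiinv /psi.
case: (leqP x 4) => H1; first by case=> <-; rewrite H1; split => //; lia.
case: ifP => H2.
  case=> <-; split; first lia.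
  have -> : (x - n <= 4) = false by lia.
  have -> : (x - n <= 10) by lia.
  lia.
case: ifP => H3 //; case=> <-; split; first lia.
have -> : (x - 3 * n <= 4) = false by lia.
have -> : (x - 3 * n <= 10) = false by lia.
lia.
Qed.

Lemma psi_inj n a b : a < 39 -> b < 39 -> psi n a = psi n b -> a = b.
Proof. by move=> Ha Hb E; have := psiK n Ha; rewrite E psiK // => -[]. Qed.

Lemma E3E : E3 = Tl 3.
Proof. by vm_compute. Qed.

Lemma pair3 (a b c a' b' c' : nat) : a = a' -> b = b' -> c = c' -> ((a, b), c) = ((a', b'), c').
Proof. by move=> -> -> ->. Qed.

Definition emap n (e : edge) : edge := ((psi n (eu e), psi n (ev e)), ecol e).

Lemma edge_img n i : i < 38 -> nth_edge (Tl (n + 3)) (phi n i) = emap n (nth_edge E3 i).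
Proof.
move=> Hi.
have [H24|H24] := ltnP i 24.
  rewrite /phi ifT; last by lia.
  rewrite nth_Tl_low //.
  do 24 (case: i Hi H24 => [|i] Hi H24; first by rewrite /emap /psi /eu /ev /ecol /=; apply: pair3; lia).
  by [].
have [H28|H28] := ltnP i 28.
  have -> : i = 24 + (i - 24) by lia.
  rewrite /phi ifT; last by lia.
  rewrite nth_Tl_path; last by lia.
  rewrite E3E nth_Tl_path; last by lia.
  rewrite /emap /psi /eu /ev /ecol /= !ifT //; lia.
have [H34|H34] := ltnP i 34.
  rewrite /phi ifF; last by lia. rewrite ifT; last by lia.
  have -> : i + n = 24 + (n + 3).+1 + (i - 28) by lia.
  rewrite nth_Tl_pend; last by lia.
  have -> : i = 24 + 3.+1 + (i - 28) by lia.
  rewrite E3E nth_Tl_pend; last by lia.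
  have : i - 28 < 6 by lia.
  move: (i - 28) => y; do 6 (case: y => [|y]; first by move=> _; rewrite /emap /psi /eu /ev /ecol /=; apply: pair3; lia).
  by [].
rewrite /phi ifF; last by lia. rewrite ifF; last by lia.
have -> : i + 3 * n = 24 + (n + 3).+1 + 2 * (n + 3) + (i - 34) by lia.
rewrite nth_Tl_P; last by lia.
have -> : i = 24 + 3.+1 + 2 * 3 + (i - 34) by lia.
rewrite E3E nth_Tl_P; last by lia.
have : i - 34 < 4 by lia.
move: (i - 34) => y; do 4 (case: y => [|y]; first by move=> _; rewrite /emap /psi /eu /ev /ecol /=; apply: pair3; lia).
by [].
Qed.

Lemma psiinv_none n y : 4 < y -> y < n + 5 \/ (n + 10 < y /\ y < 3 * n + 11) -> psiinv n y = None.
Proof.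
move=> H1 H2; rewrite /psiinv.
have -> : (y <= 4) = false by lia.
have -> : (n + 5 <= y) && (y <= n + 10) = false by lia.
by have -> : (3 * n + 11 <= y) && (y <= 3 * n + 38) = false by lia.
Qed.

Lemma psiinv_out n y : 4 <= y -> y < n + 5 \/ (n + 10 < y /\ y < 3 * n + 11) ->
  forall a, psiinv n y = Some a -> a = 4.
Proof.
move=> H1 H2 a; case: (ltnP 4 y) => H3; first by rewrite psiinv_none.
have -> : y = 4 by lia.
by rewrite /psiinv /= => -[].
Qed.

Definition incid (e : edge) (y : nat) := y = eu e \/ y = ev e.

Lemma edge_cases n j : j < size (Tl (n + 3)) ->
  (exists2 i, i < 38 & j = phi n i) \/
  ((forall i, i < 38 -> j != phi n i) /\
   forall y, incid (nth_edge (Tl (n + 3)) j) y -> forall a, psiinv n y = Some a -> a = 4).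
Proof.
rewrite size_Tl => Hj.
have [H28|H28] := ltnP j 28.
  by left; exists j => //; [lia | rewrite /phi ifT].
have [H1|H1] := ltnP j (28 + n).
  right; split.
    move=> i Hi; rewrite /phi; case: ifP => ?; first by lia.
    by case: ifP => ?; lia.
  have -> : j = 24 + (j - 24) by lia.
  rewrite nth_Tl_path; last by lia.
  move=> y [] ->; rewrite /eu /ev /=; apply: psiinv_out; lia.
have [H2|H2] := ltnP j (24 + (n + 3).+1 + 2 * (n + 3)).
  have [H3|H3] := ltnP j (34 + n).
    by left; exists (j - n); [lia | rewrite /phi; case: ifP => ?; [lia | rewrite ifT; lia]].
  right; split.
    move=> i Hi; rewrite /phi; case: ifP => ?; first by lia.
    by case: ifP => ?; lia.
  have -> : j = 24 + (n + 3).+1 + (j - 28 - n) by lia.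
  rewrite nth_Tl_pend; last by lia.
  have Hy : 6 <= j - 28 - n < 2 * (n + 3) by lia.
  move: (j - 28 - n) Hy => y Hy.
  have E := odd_double_half y.
  case: (odd y) E => /= E.
    move=> z [] ->; rewrite /eu /ev /=; apply: psiinv_out; lia.
  move=> z [] ->; rewrite /eu /ev /=; apply: psiinv_out; lia.
left; exists (j - 3 * n); first by lia.
by rewrite /phi; case: ifP => ?; [lia | rewrite ifF; lia].
Qed.

Definition incb (a i : nat) := (eu (nth_edge E3 i) == a) || (ev (nth_edge E3 i) == a).

Lemma inclE : incl = [seq [seq i <- iota 0 38 | incb a i] | a <- iota 0 39].
Proof. by vm_compute. Qed.

Lemma E3_facts : all (fun i => [&& eu (nth_edge E3 i) < 39, ev (nth_edge E3 i) < 39,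
   eu (nth_edge E3 i) != ev (nth_edge E3 i) & ecol (nth_edge E3 i) \in [:: 1; 2; 3]]) (iota 0 38).
Proof. by vm_compute. Qed.

Lemma E3_fact i : i < 38 -> [/\ eu (nth_edge E3 i) < 39, ev (nth_edge E3 i) < 39,
   eu (nth_edge E3 i) != ev (nth_edge E3 i) & ecol (nth_edge E3 i) \in [:: 1; 2; 3]].
Proof. by move=> Hi; have /allP/(_ i) := E3_facts; rewrite mem_iota /= => /(_ Hi) /and4P. Qed.

Lemma size_E3 : size E3 = 38. Proof. by []. Qed.

Lemma incl_spec a i : (i \in nth [::] incl a) = (i < 38) && incb a i.
Proof.
case: (ltnP a 39) => Ha.
  rewrite inclE (nth_map 0) ?size_iota // nth_iota // mem_filter mem_iota /=.
  by rewrite andbC.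
rewrite nth_default; last by rewrite inclE size_map size_iota.
rewrite in_nil; case: (ltnP i 38) => Hi //=.
have [H1 H2 _ _] := E3_fact Hi.
by rewrite /incb; apply/esym/norP; split; apply/eqP; lia.
Qed.

Lemma mixedbP C a : mixedb C a ->
  exists i i', [/\ i < 38, i' < 38, incb a i, incb a i' & nth false C i && ~~ nth false C i'].
Proof.
rewrite /mixedb => /andP[/hasP[i Hi Ci] /hasP[i' Hi' Ci']].
move: Hi Hi'; rewrite !incl_spec => /andP[? ?] /andP[? ?].
by exists i, i'; split => //; rewrite Ci.
Qed.

Lemma intl_facts : all (fun a => (a \in intl) || (size (nth [::] incl a) <= 1)) (iota 0 39).
Proof. by vm_compute. Qed.

Lemma mixed_int C a : mixedb C a -> [/\ a < 39, a != 4 & a \in intl].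
Proof.
case: (ltnP a 39) => Ha; last first.
  by rewrite /mixedb nth_default // inclE size_map size_iota.
have /allP/(_ a) := intl_facts; rewrite mem_iota /= => /(_ Ha) /orP[Hin|].
  by move=> _; split => //; apply/eqP => E; move: Hin; rewrite E.
rewrite /mixedb; case: (nth [::] incl a) => [|x [|y l]] //= _.
by rewrite !orbF; case: (nth false C x).
Qed.

Lemma mixed_set C i a : ~~ incb a i -> mixedb (set_nth false C i true) a = mixedb C a.
Proof.
move=> Hn; rewrite /mixedb.
have E : {in nth [::] incl a, forall j, nth false (set_nth false C i true) j = nth false C j}.
  move=> j; rewrite incl_spec => /andP[_ Hj]; rewrite nth_set_nth /=.
  by case: eqP => // Eij; move: Hn; rewrite -Eij Hj.
by rewrite (eq_in_has E) (eq_in_has (fun j Hj => congr1 negb (E j Hj))).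
Qed.

Lemma colok_facts : all (fun a => all (fun k => colok k a == color_at E3 a k.+1) (iota 0 3)) (iota 0 39).
Proof. by vm_compute. Qed.

Lemma colokE k a : k < 3 -> a < 39 -> colok k a = color_at E3 a k.+1.
Proof.
move=> Hk Ha.
have H1 : a \in iota 0 39 by rewrite mem_iota.
have H2 : k \in iota 0 3 by rewrite mem_iota.
by have /eqP := allP (allP colok_facts a H1) k H2.
Qed.

Section Sem.
Variable G : elgraph.
Variable ct : 'I_3 -> nat.

Definition Inv (s : sstate 3) :=
  (forall x i i', i < size G -> i' < size G -> incid (nth_edge G i) x -> incid (nth_edge G i') x ->
     sclean s i -> ~ sclean s i' -> exists j, spos s j = Some x) /\
  (forall j x, spos s j = Some x -> color_at G x (ct j)).

Lemma Inv_init : Inv (init_state 3).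
Proof. by split. Qed.

Lemma next_clean (s : sstate 3) (m : move 3) i : i < size G -> no_recont G s m ->
  (sclean (next G s m) i <-> clean_after s m i).
Proof. by move=> Hi Hn; split => [[]|H] //; split => //; exact: Hn. Qed.

Lemma color_at_incid e x : e \in G -> incid e x -> color_at G x (ecol e).
Proof.
move=> He [->|->]; apply/hasP; exists e => //; by rewrite !eqxx ?orbT.
Qed.

Lemma Inv_next (s : sstate 3) (m : move 3) : Inv s -> legal G ct s m -> no_recont G s m -> Inv (next G s m).
Proof.
move=> [I1 I2] Hl Hn; split.
  move=> x i i' Hi Hi' Ii Ii' Ci Ci'.
  have Ca := (next_clean Hi Hn).1 Ci.
  have Ca' : ~ clean_after s m i'.
    by move=> C; apply: Ci'; exact: (next_clean Hi' Hn).2.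
  have := Hn i Hi Ca.
  case: (boolP (occupied (pos_after G s m) x)) => [/existsP[j /eqP Hj] _|Hno]; first by exists j.
  case; exists i'; first by split.
  exists x, x; split; first by case: Ii => E; [left|right].
  split; first by case: Ii' => E; [left|right].
  by exists [::]; split => //= z; rewrite inE => /eqP ->.
move=> j x /=; rewrite /pos_after; clear Hn.
case: m Hl => [j0 v | j0 | j0 i] /= Hl; case: eqP => [->|_]; try exact: I2.
- by case: Hl => _ H [<-].
- by [].
- case: Hl => Hi [Hc [u [Hu _]]]; rewrite Hu => -[<-]; rewrite -Hc.
  apply: color_at_incid; first by apply: mem_nth.
  rewrite /other; case: eqP => _; by [right | left].
Qed.

End Sem.

Section Sim.
Variable n : nat.
Variable ct : 'I_3 -> nat.
Variable sg : nat -> 'I_3.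
Hypothesis Hsg : forall k, k < 3 -> ct (sg k) = k.+1.
Hypothesis Hsurj : forall j, exists2 k, k < 3 & sg k = j.

Local Notation G := (Tl (n + 3)).

Definition nposf (C : seq bool) (o : option nat) : option nat :=
  if o is Some x then (if psiinv n x is Some a then (if mixedb C a then Some a else None) else None)
  else None.

Definition absP (C : seq bool) (s : sstate 3) : seq (option nat) :=
  map (fun k => nposf C (spos s (sg k))) (iota 0 3).

Definition Rel (s : sstate 3) (t : ast) :=
  [/\ size t.1 = 38, forall i, i < 38 -> (nth false t.1 i <-> sclean s (phi n i)) & t.2 = absP t.1 s].

Lemma phi_lt i : i < 38 -> phi n i < size G.
Proof. move=> Hi; rewrite size_Tl /phi; case: ifP => H1; last case: ifP => H2; lia. Qed.

Lemma phi_inj i i' : i < 38 -> i' < 38 -> phi n i = phi n i' -> i = i'.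
Proof. move=> H1 H2; rewrite /phi; repeat (case: ifP; move=> ?); lia. Qed.

Lemma sg_inj k k' : k < 3 -> k' < 3 -> sg k = sg k' -> k = k'.
Proof. by move=> H1 H2 E; have := Hsg H1; rewrite E Hsg // => -[]. Qed.

Lemma nth_absP C s k : k < 3 -> nth None (absP C s) k = nposf C (spos s (sg k)).
Proof. by move=> Hk; rewrite /absP (nth_map 0) ?size_iota // nth_iota. Qed.

Lemma incid_img a i : i < 38 -> incb a i -> incid (nth_edge G (phi n i)) (psi n a).
Proof.
move=> Hi; rewrite edge_img // /emap /incb /incid /eu /ev /=.
by case/orP => /eqP ->; [left | right].
Qed.

Lemma mixed_occ s t a : Inv G ct s -> Rel s t -> mixedb t.1 a ->
  exists j, spos s j = Some (psi n a).
Proof.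
move=> [I1 _] [_ HC _] /mixedbP [i [i' [Hi Hi' Ia Ia' /andP[Ci Ci']]]].
apply: (I1 _ (phi n i) (phi n i')); try exact: phi_lt; try exact: incid_img.
  by apply/HC.
by move/HC => H; move: Ci'; rewrite H.
Qed.

Lemma nposf_psi C a : a < 39 -> nposf C (Some (psi n a)) = if mixedb C a then Some a else None.
Proof. by move=> Ha; rewrite /nposf psiK. Qed.

Lemma guard_ok s t a : Inv G ct s -> Rel s t -> mixedb t.1 a -> Some a \in t.2.
Proof.
move=> HI HR Hm; have [j Hj] := mixed_occ HI HR Hm.
have [Ha _ _] := mixed_int Hm.
have [k Hk Ek] := Hsurj j.
case: HR => _ _ ->.
have <- : nth None (absP t.1 s) k = Some a by rewrite nth_absP // Ek Hj nposf_psi // Hm.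
by apply: mem_nth; rewrite size_map size_iota.
Qed.

Lemma star a j : a < 39 -> a != 4 -> j < size G -> incid (nth_edge G j) (psi n a) ->
  exists2 i, i < 38 & j = phi n i /\ incb a i.
Proof.
move=> Ha Ha4 Hj Hinc; case: (edge_cases Hj) => [[i Hi Ej]|[_ Hno]]; last first.
  by have := Hno _ Hinc a (psiK n Ha); move/eqP: Ha4.
exists i => //; split => //.
move: Hinc; rewrite Ej edge_img // /emap /incid /incb /eu /ev /=.
have [H1 H2 _ _] := E3_fact Hi.
by case=> /psi_inj E; apply/orP; [left | right]; apply/eqP; rewrite E.
Qed.

Lemma col_ok s k a : Inv G ct s -> k < 3 -> spos s (sg k) = Some (psi n a) -> a < 39 -> a != 4 ->
  colok k a.
Proof.
move=> [_ I2] Hk Hp Ha Ha4; have := I2 _ _ Hp; rewrite Hsg // colokE //.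
case/hasP => e He /andP[Hi /eqP Hc].
have Hj : index e G < size G by rewrite index_mem.
have Ee : nth_edge G (index e G) = e by rewrite /nth_edge nth_index.
have Hie : incid (nth_edge G (index e G)) (psi n a).
  by rewrite Ee /incid; case/orP: Hi => /eqP <-; [left|right].
have [i Hi3 [Ej Hinc]] := star Ha Ha4 Hj Hie.
apply/hasP; exists (nth_edge E3 i); first by apply: mem_nth.
move: Hinc Hc; rewrite /incb => -> /=.
have := edge_img n Hi3; rewrite -Ej Ee => ->.
by rewrite /emap /ecol /= => ->.
Qed.


Definition Gsz := size G.

Lemma Rel_mk s C : size C = 38 -> (forall i, i < 38 -> (nth false C i <-> sclean s (phi n i))) ->
  Rel s (C, absP C s).
Proof. by move=> H1 H2; split. Qed.

Lemma succ_set C P k x t : (k, x) \in setch ->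
  trySet C P (map (mixedb C) (iota 0 39)) k x = Some t -> t \in succ (C, P).
Proof.
move=> Hc Ht; rewrite /succ mem_cat mem_pmap; apply/orP; left.
by apply/mapP; exists (k, x) => //=; rewrite Ht.
Qed.

Lemma succ_slide C P i d t : i < 38 ->
  t \in slideGroup C P (map (mixedb C) (iota 0 39)) i (nth_edge E3 i) d -> t \in succ (C, P).
Proof.
move=> Hi Ht; rewrite /succ mem_cat; apply/orP; right.
apply/flatten_mapP; exists ((i, nth_edge E3 i), d) => //.
apply: allpairs_f; last by rewrite !inE; case: (d).

have <- : nth (0, ((0,0),0)) (zip (iota 0 38) E3) i = (i, nth_edge E3 i).
  by rewrite nth_zip // nth_iota.
by apply: mem_nth; rewrite size_zip size_iota.
Qed.

Lemma nth_mv C a : a < 39 -> nth false (map (mixedb C) (iota 0 39)) a = mixedb C a.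
Proof. by move=> Ha; rewrite (nth_map 0) ?size_iota // nth_iota. Qed.

Lemma nposf_out C x : (forall a, psiinv n x = Some a -> a = 4) -> nposf C (Some x) = None.
Proof.
rewrite /nposf; case E: (psiinv n x) => [a|] // H; rewrite (H a) //.
by case M: (mixedb C 4) => //; have [_ /eqP] := mixed_int M.
Qed.


Lemma absP_eq C s1 s2 : (forall k, k < 3 -> nposf C (spos s1 (sg k)) = nposf C (spos s2 (sg k))) ->
  absP C s1 = absP C s2.
Proof. by move=> H; apply/eq_in_map => k; rewrite mem_iota => /andP[_ Hk]; apply: H. Qed.

Lemma absP_set C s1 s2 k x : k < 3 -> nposf C (spos s2 (sg k)) = x ->
  (forall k', k' < 3 -> k' != k -> nposf C (spos s2 (sg k')) = nposf C (spos s1 (sg k'))) ->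
  absP C s2 = set_nth None (absP C s1) k x.
Proof.
move=> Hk Hx H; apply: (@eq_from_nth _ None).
  by rewrite size_set_nth /absP !size_map !size_iota; apply/esym/maxn_idPr.
rewrite /absP size_map size_iota => k' Hk'.
rewrite nth_set_nth /= -/(absP C s1) -/(absP C s2) !nth_absP //.
by case: eqP => [->|/eqP ne] //; apply: H.
Qed.

Lemma sim_place s t j v : Inv G ct s -> Rel s t -> legal G ct s (Place j v) ->
  no_recont G s (Place j v) ->
  exists t', Rel (next G s (Place j v)) t' /\ (t' = t \/ t' \in succ t).
Proof.
case: t => C P HI [HsC HC]; rewrite [(C, P).2]/= => -> Hl Hn.
have HI' := Inv_next HI Hl Hn.
set s' := next G s (Place j v).
have HR' : Rel s' (C, absP C s').
  apply: Rel_mk => // i Hi; rewrite (HC i Hi).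
  by split => [H|H]; [apply/(next_clean (phi_lt Hi) Hn) | exact: (next_clean (phi_lt Hi) Hn).1 H].
exists (C, absP C s'); split => //.
case: Hl => Hj Hcol.
have [k Hk Ek] := Hsurj j.
have Hoth : forall k', k' < 3 -> k' != k -> nposf C (spos s' (sg k')) = nposf C (spos s (sg k')).
  move=> k' Hk' ne; rewrite /s' /= ifF //; apply/eqP => E; move/eqP: ne; apply.
  by apply: sg_inj => //; rewrite E.
have Hkk : spos s' (sg k) = Some v by rewrite /s' /= Ek eqxx.
case E: (nposf C (Some v)) => [a|]; last first.
  left; congr pair; apply: absP_eq => k' Hk'.
  case: (eqVneq k' k) => [->|ne]; last by apply: Hoth.
  by rewrite Hkk E Ek Hj.
right; apply: (succ_set (k := k) (x := Some a)).
  rewrite /setch; apply/allpairsP; exists (k, Some a); split => //; first by rewrite mem_iota /=; lia.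
  move: E; rewrite /nposf; case: (psiinv n v) => // b; case M: (mixedb C b) => // -[<-].
  by have [_ _ Hin] := mixed_int M; rewrite inE (mem_map (@Some_inj _)) Hin orbT.
move: E; rewrite /nposf; case Ev: (psiinv n v) => [b|] //; case M: (mixedb C b) => // -[Eb].
subst b; have [Ha Hv] := psiinvP Ev.
have [_ Ha4 _] := mixed_int M.
rewrite /trySet nth_absP // Ek Hj /= nth_mv // M andbT.
rewrite (col_ok HI' Hk _ Ha Ha4); last by rewrite Hkk Hv.
have Hx : nposf C (spos s' (sg k)) = Some a by rewrite Hkk /nposf Ev M.
by rewrite (absP_set Hk Hx Hoth).
Qed.

Lemma sim_remove s t j : Inv G ct s -> Rel s t -> legal G ct s (Remove j) ->
  no_recont G s (Remove j) ->
  exists t', Rel (next G s (Remove j)) t' /\ (t' = t \/ t' \in succ t).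
Proof.
case: t => C P HI [HsC HC]; rewrite [(C, P).2]/= => -> Hl Hn.
have HI' := Inv_next HI Hl Hn.
set s' := next G s (Remove j).
have HR' : Rel s' (C, absP C s').
  apply: Rel_mk => // i Hi; rewrite (HC i Hi).
  by split => [H|H]; [apply/(next_clean (phi_lt Hi) Hn) | exact: (next_clean (phi_lt Hi) Hn).1 H].
exists (C, absP C s'); split => //.
have [k Hk Ek] := Hsurj j.
have Hoth : forall k', k' < 3 -> k' != k -> nposf C (spos s' (sg k')) = nposf C (spos s (sg k')).
  move=> k' Hk' ne; rewrite /s' /= ifF //; apply/eqP => E; move/eqP: ne; apply.
  by apply: sg_inj => //; rewrite E.
have Hkk : spos s' (sg k) = None by rewrite /s' /= Ek eqxx.
case E: (nposf C (spos s j)) => [a|]; last first.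
  left; congr pair; apply: absP_eq => k' Hk'.
  case: (eqVneq k' k) => [->|ne]; last by apply: Hoth.
  by rewrite Hkk Ek E.
right; apply: (succ_set (k := k) (x := None)).
  by rewrite /setch; apply/allpairsP; exists (k, None); split => //; rewrite mem_iota /=; lia.
have Hs' : absP C s' = set_nth None (absP C s) k None.
  by apply: (absP_set Hk _ Hoth); rewrite Hkk.
rewrite /trySet nth_absP // Ek E /= -Hs'.
have M : mixedb C a.
  by move: E; rewrite /nposf; case: (spos s j) => // x; case: (psiinv n x) => // b; case: ifP => // ? [<-].
have [Ha _ _] := mixed_int M.
have Gd := guard_ok HI' HR' M; rewrite /= in Gd.
by rewrite nth_mv // M /= /guarded Gd.
Qed.

End Sim.

Lemma sg_mem C P mv i k u w g :
  (nth None P k == Some u) || ((nth None P k == None) && ~~ nth false mv u) ->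
  g \in gsl P k u w ->
  let C' := set_nth false C i true in
  let Q := map (fun k' => normo (mixp mv u w (mixedb C' u) (mixedb C' w)) (newpos P k u w g k'))
             (iota 0 3) in
  (~~ mixedb C' u || guarded Q u) && (~~ mixedb C' w || guarded Q w) ->
  (C', Q) \in sgroup C P mv i k u w.
Proof.
move=> Hc Hg C' Q Hv; rewrite /sgroup Hc mem_pmap.
by apply/mapP; exists g => //; rewrite -/C' -/Q Hv.
Qed.

Lemma gsl_mem P k u w g0 g1 g2 : g0 \in opts P k u w 0 -> g1 \in opts P k u w 1 ->
  g2 \in opts P k u w 2 -> [:: g0; g1; g2] \in gsl P k u w.
Proof.
move=> H0 H1 H2; apply/allpairsP; exists ((g0, g1), g2); split => //.
by apply/allpairsP; exists (g0, g1).
Qed.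

Lemma other_incid e x : incid e (other e x).
Proof. by rewrite /other /incid; case: eqP => _; [right | left]. Qed.

Section Slide.
Variable n : nat.
Variable ct : 'I_3 -> nat.
Variable sg : nat -> 'I_3.
Hypothesis Hsg : forall k, k < 3 -> ct (sg k) = k.+1.
Hypothesis Hsurj : forall j, exists2 k, k < 3 & sg k = j.

Local Notation G := (Tl (n + 3)).

Lemma nposfE C o : nposf n C o = normo (mixedb C) (if o is Some x then psiinv n x else None).
Proof. by case: o => // x; rewrite /nposf; case: (psiinv n x). Qed.

Lemma sim_slide s t j i : Inv G ct s -> Rel n sg s t -> legal G ct s (Slide j i) ->
  no_recont G s (Slide j i) ->
  exists t', Rel n sg (next G s (Slide j i)) t' /\ (t' = t \/ t' \in succ t).
Proof.
case: t => C P HI [HsC HC]; rewrite [(C, P).2]/= => -> Hl Hn.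
have HI' := Inv_next HI Hl Hn.
set s' := next G s (Slide j i).
have [k Hk Ek] := Hsurj j.
case: (Hl) => Hi [Hcol [u0 [Hu0 Hinc0]]].
have Hoth : forall k', k' < 3 -> k' != k -> spos s' (sg k') = spos s (sg k').
  move=> k' Hk' ne; rewrite /s' /= ifF //; apply/eqP => E; move/eqP: ne; apply.
  by apply: (sg_inj Hsg) => //; rewrite E.
have Hkk : spos s' (sg k) = Some (other (nth_edge G i) u0) by rewrite /s' /= Ek eqxx Hu0.
have Hcl : forall i', i' < size G -> (sclean s' i' <-> sclean s i' \/ i' = i).
  by move=> i' Hi'; apply: (next_clean Hi' Hn).
case: (edge_cases Hi) => [[i0 Hi0 Ei]|[Hnot Hout]]; last first.
  have HR' : Rel n sg s' (C, absP n sg C s').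
    apply: Rel_mk => // i' Hi'; rewrite (HC i' Hi') (Hcl _ (phi_lt n Hi')).
    split => [H|[H|E]] //; first by left.
    by move: (Hnot _ Hi'); rewrite -E eqxx.
  exists (C, absP n sg C s'); split => //; left; congr pair.
  apply: absP_eq => k' Hk'.
  case: (eqVneq k' k) => [->|ne]; last by rewrite Hoth.
  rewrite Hkk Ek Hu0 !nposf_out //; first by apply: Hout; exact: Hinc0.
  by apply: Hout; apply: other_incid.
set e3 := nth_edge E3 i0.
have Ee : nth_edge G i = emap n e3 by rewrite Ei edge_img.
have [Hu3 Hv3 Hne3 Hc3] := E3_fact Hi0.
have Hk3 : (ecol e3).-1 = k.
  by move: Hcol; rewrite Ee /emap /ecol /= -Ek Hsg // => ->.
set d := u0 == psi n (eu e3).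
set u := if d then eu e3 else ev e3.
set w := if d then ev e3 else eu e3.
have Hu : u0 = psi n u.
  rewrite /u; case: (boolP d) => [/eqP //|Hd].
  by move: Hinc0 Hd; rewrite Ee /emap /eu /ev /d /= => -[->|->] //; rewrite eqxx.
have Hw : other (nth_edge G i) u0 = psi n w.
  rewrite Ee /other /emap /eu /ev /= /w -/(eu e3) -/(ev e3).
  by rewrite eq_sym -/d; case: ifP.
have Hul : u < 39 by rewrite /u; case: (d).
have Hwl : w < 39 by rewrite /w; case: (d).
have Huw : u != w by rewrite /u /w; case: (d); rewrite // eq_sym.
have Hincb : forall a, incb a i0 = (a == u) || (a == w).
  move=> a; rewrite /incb -/e3 /u /w !(eq_sym a); case: ifP => _ //; exact: orbC.
set C' := set_nth false C i0 true.
have HsC' : size C' = 38 by rewrite size_set_nth HsC; apply/maxn_idPr.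
have HR' : Rel n sg s' (C', absP n sg C' s').
  apply: Rel_mk => // i' Hi'; rewrite (Hcl _ (phi_lt n Hi')) nth_set_nth /= -(HC i' Hi').
  case: (eqVneq i' i0) => [->|ne]; first by split => // _; right.
  split => [H|[H|E]] //; first by left.
  by move: ne; rewrite (@phi_inj n i' i0 Hi' Hi0) ?eqxx // -Ei.
exists (C', absP n sg C' s'); split => //; right.
apply: (succ_slide (d := d) Hi0).
rewrite /slideGroup -/e3 Hk3 -/u -/w.
set mv := map (mixedb C) (iota 0 39).
set gsel := fun k' => if k' == k then 0 else
  if [&& spos s (sg k') == Some (psi n u), ~~ mixedb C u & mixedb C' u] then 1 else
  if [&& spos s (sg k') == Some (psi n w), ~~ mixedb C w & mixedb C' w] then 2 else 0.
have HPk : nth None (absP n sg C s) k = if mixedb C u then Some u else None.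
  by rewrite nth_absP // Ek Hu0 Hu nposf_psi.
have Hmix : forall a, a < 39 -> mixp mv u w (mixedb C' u) (mixedb C' w) a = mixedb C' a.
  move=> a Ha; rewrite /mixp; case: eqP => [->//|/eqP nu]; case: eqP => [->//|/eqP nw].
  by rewrite nth_mv // mixed_set // Hincb negb_or nu nw.
have Hopt : forall k', k' < 3 -> gsel k' \in opts (absP n sg C s) k u w k'.
  move=> k' Hk'; rewrite /gsel /opts; case: eqP => [_|/eqP ne]; first by rewrite inE.
  rewrite nth_absP //.
  case: ifP => [/and3P[/eqP Eo Mu Mu']|_].
    rewrite Eo nposf_psi // (negbTE Mu) eqxx.
    have [_ Hu4 _] := mixed_int Mu'.
    have Cu : colok k' u by apply: (col_ok Hsg HI' Hk' _ Hul Hu4); rewrite Hoth.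
    by rewrite Cu !inE.
  case: ifP => [/and3P[/eqP Eo Mw Mw']|_]; last by case: ifP; rewrite inE.
  rewrite Eo nposf_psi // (negbTE Mw) eqxx.
  have [_ Hw4 _] := mixed_int Mw'.
  have Cw : colok k' w by apply: (col_ok Hsg HI' Hk' _ Hwl Hw4); rewrite Hoth.
  by rewrite Cw inE mem_cat inE eqxx orbT.
have Hg : [:: gsel 0; gsel 1; gsel 2] \in gsl (absP n sg C s) k u w.
  by apply: gsl_mem; apply: Hopt.
have HQ : map (fun k' => normo (mixp mv u w (mixedb C' u) (mixedb C' w))
            (newpos (absP n sg C s) k u w [:: gsel 0; gsel 1; gsel 2] k')) (iota 0 3) = absP n sg C' s'.
  apply/eq_in_map => k'; rewrite mem_iota => /andP[_ Hk'].
  have Hk'3 : k' < 3 by lia.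
  rewrite /newpos nth_absP //.
  case: (eqVneq k' k) => [->|ne].
    by rewrite Hkk Hw nposf_psi // /normo Hmix.
  have -> : nth 0 [:: gsel 0; gsel 1; gsel 2] k' = gsel k' by case: (k') Hk'3 => [|[|[|]]].
  rewrite Hoth // /gsel (negbTE ne).
  case: ifP => [/and3P[/eqP Eo _ Mu']|N1].
    by rewrite Eo nposf_psi // /normo Hmix // Mu'.
  case: ifP => [/and3P[/eqP Eo _ Mw']|N2].
    by rewrite Eo nposf_psi // /normo Hmix // Mw'.
  rewrite !nposfE.
  case: (spos s (sg k')) N1 N2 => [x|] //= N1 N2.
  case Ex: (psiinv n x) => [a|] //.
  have [Ha Exa] := psiinvP Ex.
  rewrite /normo; case Ma: (mixedb C a); first by rewrite Hmix.
  case Ma': (mixedb C' a) => //.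
  case: (eqVneq a u) => [Eau|nu].
    by move: N1; rewrite Exa Eau eqxx -Eau Ma Ma'.
  case: (eqVneq a w) => [Eaw|nw].
    by move: N2; rewrite Exa Eaw eqxx -Eaw Ma Ma'.
  by move: Ma'; rewrite mixed_set ?Ma // Hincb negb_or nu nw.
rewrite -HQ; apply: sg_mem => //.
  by rewrite HPk /mv nth_mv //; case: (mixedb C u); rewrite ?eqxx.
rewrite HQ /guarded -/C'.
have Gu := guard_ok Hsurj HI' HR' (a := u); have Gw := guard_ok Hsurj HI' HR' (a := w).
rewrite /= in Gu Gw.
apply/andP; split; first by case: (mixedb C' u) Gu => // ->.
by case: (mixedb C' w) Gw => // ->.
Qed.

End Slide.

Section Run.
Variable n : nat.
Variable ct : 'I_3 -> nat.
Variable sg : nat -> 'I_3.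
Hypothesis Hsg : forall k, k < 3 -> ct (sg k) = k.+1.
Hypothesis Hsurj : forall j, exists2 k, k < 3 & sg k = j.

Local Notation G := (Tl (n + 3)).

Lemma sim s t m : Inv G ct s -> Rel n sg s t -> legal G ct s m -> no_recont G s m ->
  exists t', Rel n sg (next G s m) t' /\ (t' = t \/ t' \in succ t).
Proof.
case: m => [j v|j|j i].
- exact: (sim_place Hsg Hsurj).
- exact: (sim_remove Hsg Hsurj).
- exact: (sim_slide Hsg Hsurj).
Qed.

Lemma run ms : forall s t, Inv G ct s -> Rel n sg s t -> inRs t -> mono_search G ct s ms -> False.
Proof.
elim: ms => [|m ms IH] s t HI HR Ht /=.
  move=> Hall; have := R_nofinal Ht; rewrite /finalb.
  case: HR => HsC HC _.
  suff -> : all id t.1 by [].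
  apply/(all_nthP false) => i; rewrite HsC => Hi.
  by apply/HC => //; apply: Hall; exact: phi_lt.
case=> Hl Hn Hr.
have [t' [HR' Ht']] := sim HI HR Hl Hn.
apply: (IH _ t' (Inv_next HI Hl Hn) HR' _ Hr).
by case: Ht' => [->|H] //; apply: R_closed H.
Qed.

Lemma Rel_init : Rel n sg (init_state 3) init_ast.
Proof. by split => // i Hi; rewrite nth_nseq Hi. Qed.

End Run.

Lemma cover (G : elgraph) (ct : 'I_3 -> nat) (s : sstate 3) ms : mono_search G ct s ms ->
  (forall i, i < size G -> sclean s i -> exists j, ct j = ecol (nth_edge G i)) ->
  forall i, i < size G -> exists j, ct j = ecol (nth_edge G i).
Proof.
elim: ms s => [|m ms IH] s /=.
  by move=> Hall H i Hi; apply: H Hi (Hall i Hi).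
case=> Hl Hn Hr H; apply: IH Hr _ => i Hi /(next_clean Hi Hn).
case: m Hl Hn => [j v|j|j i'] Hl Hn /=; try exact: H Hi.
case=> [Hc|->]; first exact: H Hi Hc.
by case: Hl => _ [Hc _]; exists j.
Qed.

Definition sgf (ct : 'I_3 -> nat) (k : nat) : 'I_3 := odflt ord0 [pick j | ct j == k.+1].

Theorem lemma3p5 : forall l : nat, 7 <= l ->
  forall ct : 'I_3 -> nat,
  ~ exists ms : seq (move 3), mono_search (Tl l) ct (init_state 3) ms.
Proof.
move=> l Hl ct [ms Hms].
have El : l = (l - 3) + 3 by lia.
move: Hms; rewrite El; set n := l - 3 => Hms.
have Hcov := cover Hms (fun i _ (F : sclean (init_state 3) i) => match F with end).
have Hcol : forall k, k < 3 -> exists j, ct j = k.+1.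
  move=> k Hk.
  have Hi0 : 24 + k < 38 by lia.
  have [j Hj] := Hcov _ (phi_lt n Hi0).
  exists j; rewrite Hj edge_img // /emap /ecol /=.
  by case: k Hk Hi0 {Hj} => [|[|[|]]].
have Hsg : forall k, k < 3 -> ct (sgf ct k) = k.+1.
  move=> k Hk; rewrite /sgf; case: pickP => [j /eqP //|H].
  by have [j Hj] := Hcol k Hk; move: (H j); rewrite Hj eqxx.
have Hinj : injective (fun k : 'I_3 => sgf ct k).
  move=> a b E; apply: val_inj; have := Hsg a (ltn_ord a); rewrite E Hsg ?ltn_ord //.
  by case.
have Hsurj : forall j, exists2 k, k < 3 & sgf ct k = j.
  move=> j; have [g _ fg] := injF_bij Hinj.
  by exists (g j); [exact: ltn_ord | exact: fg].
apply: (run Hsg Hsurj (Inv_init _ _) (Rel_init n (sgf ct)) R_init Hms).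
Qed.
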